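(* Let $n\ge2$, let $X\subset\mathbb{R}^n$ be finite with the Euclidean metric $d$, let $k\in\mathbb{N}$, $Y\subset X$ and $\epsilon>0$. If $p,q\in J(Y,\epsilon)$, then $\rho^{F(Y,\epsilon)}(p,q)=\rho^Y(p,q)$.
   Context: DBSCAN$^*$: for $Y\subset X$, $\mathcal{C}(Y,\epsilon)=\{p\in Y:|\{y\in Y:d(p,y)\le\epsilon\}|>k\}$ (core points), $\mathcal{N}(Y,\epsilon)=Y\setminus\mathcal{C}(Y,\epsilon)$ (noise points), and $\mathcal{D}^*(Y,\epsilon)$ is the set of vertex sets of the connected components of the graph with vertex set $\mathcal{C}(Y,\epsilon)$ and an edge between distinct $p,q$ whenever $d(p,q)\le\epsilon$. Reachability: for $Z\subset X$ and $p\in Z$, $\operatorname{core}^Z_k(p)$ is the distance from $p$ to a $k$-th nearest neighbour of $p$ in $Z$ (the $k$-th smallest value of $d(p,z)$, $z\in Z\setminus\{p\}$, counted with multiplicity), and $\rho^Z(p,q)=\max\{\operatorname{core}^Z_k(p),\operatorname{core}^Z_k(q),d(p,q)\}$ for $p\ne q$, $\rho^Z(p,p)=0$. Cubes: $\mathcal{Q}=\mathcal{Q}(\epsilon)$ is the collection of closed cubes $\{x\in\mathbb{R}^n: j_i\frac{\epsilon}{2\sqrt n}\le x_i\le (j_i+1)\frac{\epsilon}{2\sqrt n}\}$, $j\in\mathbb{Z}^n$; $S^m=\{x:\max_i|x_i-s_i|\le m\frac{\epsilon}{2\sqrt n}\text{ for some }s\in S\}$; $\mathcal{I}(B)=\{S\in\mathcal{Q}:S\cap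 B\neq\emptyset\}$. For $A\subset X$, $S\in\mathcal{I}(A)$ is an interior cube of $A$ if $S^1\cap X\subset A$ and every $T\in\mathcal{Q}$ with $T\subset S^1$ lies in $\mathcal{I}(A)$, otherwise a boundary cube; $\partial A$ is the union of boundary cubes. For $Z\subset\mathbb{R}^n$ and integer $N\ge0$, $Z^N=\bigcup_{S\in\mathcal{I}(Z)}S^N$ and $Z^N_C=Z^N\cap C$. $\mathfrak{n}$, $\mathfrak{m}$ are the smallest integers with $\mathfrak{n}\ge\sqrt n-1$, $\mathfrak{m}\ge2\sqrt n$, and $\mathfrak{N}=\mathfrak{n}+\mathfrak{m}$. Define $J(Y,\epsilon)=\bigcup_{C\in\mathcal{D}^*(Y,\epsilon)}(\partial C)^{\mathfrak{n}}_C\cup\mathcal{N}(Y,\epsilon)$ and $F(Y,\epsilon)=\bigcup_{C\in\mathcal{D}^*(Y,\epsilon)}(\partial C)^{\mathfrak{N}}_C\cup\mathcal{N}(Y,\epsilon)$, with cubes taken in $\mathcal{Q}(\epsilon)$. *)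

(* Defs.v *)
From HB Require Import structures.
From mathcomp Require Import all_boot all_order all_algebra.
From mathcomp Require Import finmap.
From mathcomp Require Import boolp classical_sets reals.
Set Implicit Arguments. Unset Strict Implicit. Unset Printing Implicit Defensive.
Import Order.TTheory GRing.Theory Num.Theory.
Local Open Scope ring_scope.
Local Open Scope fset_scope.

Section Defs.
Context {R : realType} {n : nat}.
Local Notation V := 'rV[R]_n.

Definition edist (x y : V) : R := Num.sqrt (\sum_(i < n) (x ord0 i - y ord0 i) ^+ 2).

Definition core_pts (k : nat) (eps : R) (Y : {fset V}) : {fset V} :=
  [fset p in Y | (k < #|` [fset y in Y | (edist p y <= eps)%R]|)%N].
Definition noise_pts (k : nat) (eps : R) (Y : {fset V}) : {fset V} :=
  Y `\` core_pts k eps Y.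
Definition reach (eps : R) (A : {fset V}) (p q : V) : Prop :=
  p \in A /\ exists s : seq V,
    [/\ path (fun a b => edist a b <= eps) p s, last p s = q & all (fun x => x \in A) s].
(* C is (the vertex set of) a connected component of the graph on C(Y,eps): C in D*(Y,eps) *)
Definition dbscan_comp (k : nat) (eps : R) (Y C : {fset V}) : Prop :=
  exists2 p, p \in core_pts k eps Y &
    C = [fset q in core_pts k eps Y | `[< reach eps (core_pts k eps Y) p q >]].

(* core_k^Z(p): k-th smallest of d(p,z), z in Z\{p}, with multiplicity
   (k = 0 gives 0, the distance to p itself). *)
Definition core_dist (k : nat) (Z : {fset V}) (p : V) : R :=
  if k is k'.+1 then
    nth 0 (sort (fun a b : R => a <= b) [seq edist p z | z <- enum_fset (Z `\ p)]) k'
  else 0.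
Definition reach_dist (k : nat) (Z : {fset V}) (p q : V) : R :=
  if p == q then 0 else Num.max (core_dist k Z p) (Num.max (core_dist k Z q) (edist p q)).

Definition side (eps : R) : R := eps / (2 * Num.sqrt (n%:R)).
Definition cube (eps : R) (j : 'I_n -> int) : set V :=
  [set x | forall i, (j i)%:~R * side eps <= x ord0 i <= (j i + 1)%:~R * side eps].
Definition enl (eps : R) (m : int) (S : set V) : set V :=
  [set x | exists2 s, S s & forall i, `|x ord0 i - s ord0 i| <= m%:~R * side eps].
Definition meets (eps : R) (B : set V) (j : 'I_n -> int) : Prop :=
  exists x, cube eps j x /\ B x.
Definition fset_set_of (A : {fset V}) : set V := [set x | x \in A].
Definition interior_cube (eps : R) (X A : {fset V}) (j : 'I_n -> int) : Prop :=
  [/\ meets eps (fset_set_of A) j,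
      (forall x, enl eps 1 (cube eps j) x -> x \in X -> x \in A)
    & (forall t, (cube eps t `<=` enl eps 1 (cube eps j))%classic -> meets eps (fset_set_of A) t)].
Definition boundary_cube (eps : R) (X A : {fset V}) (j : 'I_n -> int) : Prop :=
  meets eps (fset_set_of A) j /\ ~ interior_cube eps X A j.
Definition bdry (eps : R) (X A : {fset V}) : set V :=
  [set x | exists j, boundary_cube eps X A j /\ cube eps j x].
Definition thicken (eps : R) (N : int) (Z : set V) : set V :=
  [set x | exists j, meets eps Z j /\ enl eps N (cube eps j) x].

Definition nfrak : int := Num.ceil (Num.sqrt (n%:R : R) - 1).
Definition mfrak : int := Num.ceil (2 * Num.sqrt (n%:R : R)).
Definition Nfrak : int := nfrak + mfrak.

Definition JF_set (N : int) (X : {fset V}) (k : nat) (eps : R) (Y : {fset V}) : {fset V} :=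
  [fset x in Y | `[< (exists C, dbscan_comp k eps Y C /\
                        (thicken eps N (bdry eps X C) x /\ x \in C))
                     \/ x \in noise_pts k eps Y >]].
Definition Jset X k eps Y := JF_set nfrak X k eps Y.
Definition Fset X k eps Y := JF_set Nfrak X k eps Y.
End Defs.

(* Main.v *)
From Pilot Require Import Defs.
From HB Require Import structures.
From mathcomp Require Import all_boot all_order all_algebra.
From mathcomp Require Import finmap.
From mathcomp Require Import boolp classical_sets reals.
From mathcomp Require Import ring lra zify.
Import Pilot.Defs.
Set Implicit Arguments. Unset Strict Implicit. Unset Printing Implicit Defensive.
Import Order.TTheory GRing.Theory Num.Theory.
Local Open Scope ring_scope.
Section Sorting.
Variable R : realType.
Local Notation le := (fun a b : R => a <= b).

Lemma le_total' : total le. Proof. by move=> a b; exact: le_total. Qed.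
Lemma le_trans' : transitive le. Proof. by move=> b a c; exact: le_trans. Qed.
Lemma le_anti' : antisymmetric le. Proof. by move=> a b /le_anti. Qed.

Lemma sort_split (s : seq R) x :
  sort le s = sort le (filter (fun a : R => (a <= x)%R) s) ++ sort le (filter (fun a : R => ~~ (a <= x)%R) s).
Proof.
apply: (sorted_eq le_trans' le_anti'); first exact: sort_sorted le_total' _.
  rewrite sorted_pairwise; last exact: le_trans'.
  rewrite pairwise_cat -!sorted_pairwise; try exact: le_trans'.
  rewrite !sort_sorted ?andbT; try exact: le_total'.
  apply/allrelP => a b; rewrite !mem_sort !mem_filter => /andP[ax _] /andP[bx _].
  by apply: le_trans ax _; rewrite ltW // ltNge.
rewrite perm_sort perm_sym.
have h1 : perm_eq (sort le [seq a <- s | a <= x]) [seq a <- s | a <= x] by rewrite perm_sort.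
have h2 : perm_eq (sort le [seq a <- s | ~~ (a <= x)]) [seq a <- s | ~~ (a <= x)] by rewrite perm_sort.
rewrite (perm_catr _ h1) (perm_catl _ h2).

by rewrite (perm_filterC (fun a : R => (a <= x)%R)).
Qed.

Lemma nth_sort_le (s : seq R) (x : R) (k : nat) :
  (k < count (fun a : R => (a <= x)%R) s)%N -> nth 0 (sort le s) k <= x.
Proof.
move=> hk; rewrite (sort_split s x) nth_cat size_sort size_filter hk.
have : nth 0 (sort le (filter (fun a : R => (a <= x)%R) s)) k \in sort le (filter (fun a : R => (a <= x)%R) s).
  by apply: mem_nth; rewrite size_sort size_filter.
by rewrite mem_sort mem_filter => /andP[].
Qed.

Lemma nth_sort_eq (s1 s2 : seq R) (k : nat) :
  (k < size s1)%N ->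
  perm_eq (filter (fun a : R => a <= nth 0 (sort le s1) k) s1)
          (filter (fun a : R => a <= nth 0 (sort le s1) k) s2) ->
  nth 0 (sort le s2) k = nth 0 (sort le s1) k.
Proof.
set c := nth 0 (sort le s1) k => hk hp.
have hc : c = nth 0 (sort le s1) k by [].
have hk1 : (k < size (sort le (filter (fun a : R => (a <= c)%R) s1)))%N.
  rewrite ltnNge; apply/negP => hge.
  move: hc; rewrite (sort_split s1 c) nth_cat ltnNge hge /= => hc.
  have : nth 0 (sort le (filter (fun a : R => ~~ (a <= c)%R) s1))
     (k - size (sort le (filter (fun a : R => (a <= c)%R) s1))) \in
     sort le (filter (fun a : R => ~~ (a <= c)%R) s1).
    apply: mem_nth; move: hk; rewrite -(size_sort le s1) (sort_split s1 c) size_cat.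
    move: hge; rewrite !size_sort.
    by move=> h1; rewrite ltn_subLR.
  by rewrite -hc mem_sort mem_filter lexx.
have hk1' := hk1.
rewrite (sort_split s2 c) nth_cat.
have -> : sort le (filter (fun a : R => (a <= c)%R) s2) = sort le (filter (fun a : R => (a <= c)%R) s1).
  apply/esym/perm_sortP => //; [exact: le_total' | exact: le_trans' | exact: le_anti'].
rewrite hk1 {2}hc (sort_split s1 c) nth_cat hk1'.
done.
Qed.
End Sorting.
Section CS.
Variable R : realType.
Variable n : nat.
Implicit Types f g : 'I_n -> R.

Lemma sum_sq_expand f g t :
  \sum_(i < n) (f i + t * g i) ^+ 2 =
  \sum_(i < n) f i ^+ 2 + 2 * t * \sum_(i < n) f i * g i + t ^+ 2 * \sum_(i < n) g i ^+ 2.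
Proof.
rewrite !mulr_sumr -!big_split /=; apply: eq_bigr => i _; ring.
Qed.

Lemma cs_sq f g :
  (\sum_(i < n) f i * g i) ^+ 2 <= (\sum_(i < n) f i ^+ 2) * (\sum_(i < n) g i ^+ 2).
Proof.
set A := \sum_(i < n) f i ^+ 2; set B := \sum_(i < n) g i ^+ 2; set S := \sum_(i < n) f i * g i.
have A0 : 0 <= A by apply: sumr_ge0 => i _; exact: sqr_ge0.
have B0 : 0 <= B by apply: sumr_ge0 => i _; exact: sqr_ge0.
have [Bz|Bnz] := eqVneq B 0.
  have gz : forall i, g i = 0.
    move=> i; apply/eqP; rewrite -sqrf_eq0; apply/eqP.
    by move/eqP: Bz; rewrite psumr_eq0 => [/allP/(_ i (mem_index_enum i))/implyP/(_ isT)/eqP|j _]; [|exact: sqr_ge0].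
  have -> : S = 0 by rewrite /S big1 // => i _; rewrite gz mulr0.
  by rewrite Bz expr0n mulr0.
have Bp : 0 < B by rewrite lt_def Bnz B0.
have h := sum_sq_expand f g (- S / B).
have h0 : 0 <= \sum_(i < n) (f i + (- S / B) * g i) ^+ 2 by apply: sumr_ge0 => i _; exact: sqr_ge0.
rewrite h -/A -/B -/S in h0.
have e : A + 2 * (- S / B) * S + (- S / B) ^+ 2 * B = A - S ^+ 2 / B by field; rewrite Bnz.
rewrite e subr_ge0 ler_pdivrMr // in h0.
Qed.

Lemma cs f g :
  \sum_(i < n) f i * g i <= Num.sqrt (\sum_(i < n) f i ^+ 2) * Num.sqrt (\sum_(i < n) g i ^+ 2).
Proof.
rewrite -sqrtrM; last by apply: sumr_ge0 => i _; exact: sqr_ge0.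
apply: le_trans (ler_norm _) _.
rewrite -sqrtr_sqr ler_sqrt; first exact: cs_sq.
by apply: mulr_ge0; apply: sumr_ge0 => i _; exact: sqr_ge0.
Qed.

Lemma mink f g :
  Num.sqrt (\sum_(i < n) (f i + g i) ^+ 2) <=
  Num.sqrt (\sum_(i < n) f i ^+ 2) + Num.sqrt (\sum_(i < n) g i ^+ 2).
Proof.
have A0 : 0 <= \sum_(i < n) f i ^+ 2 by apply: sumr_ge0 => i _; exact: sqr_ge0.
have B0 : 0 <= \sum_(i < n) g i ^+ 2 by apply: sumr_ge0 => i _; exact: sqr_ge0.
rewrite -[X in _ <= X]ger0_norm ?addr_ge0 ?sqrtr_ge0 // -sqrtr_sqr.
rewrite ler_sqrt; last exact: sqr_ge0.
have e1 := sum_sq_expand f g 1.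
under eq_bigr do rewrite -[g _]mul1r.
rewrite e1 expr1n !mul1r mulr1.
have := cs f g.
rewrite sqrrD !sqr_sqrtr //.
move=> h; lra.
Qed.
End CS.

Section Geo.
Variable R : realType.
Variable n : nat.
Local Notation V := 'rV[R]_n.
Local Notation sd := (@side R n).

Lemma sum_sq_ge0 (f : 'I_n -> R) : 0 <= \sum_(i < n) f i ^+ 2.
Proof. by apply: sumr_ge0 => i _; exact: sqr_ge0. Qed.

Lemma edist_ge0 (x y : V) : 0 <= edist x y.
Proof. exact: sqrtr_ge0. Qed.

Lemma edist_sym (x y : V) : edist x y = edist y x.
Proof. by rewrite /edist; congr Num.sqrt; apply: eq_bigr => i _; rewrite -opprB sqrrN. Qed.

Lemma edist_xx (x : V) : edist x x = 0.
Proof. by rewrite /edist big1 ?sqrtr0 // => i _; rewrite subrr expr0n. Qed.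

Lemma coord_le (x y : V) i : `|x ord0 i - y ord0 i| <= edist x y.
Proof.
rewrite -sqrtr_sqr /edist ler_sqrt; last exact: sum_sq_ge0.
rewrite (bigD1 i) //= lerDl; apply: sumr_ge0 => j _; exact: sqr_ge0.
Qed.

Lemma edist_tri (x y z : V) : edist x z <= edist x y + edist y z.
Proof.
rewrite /edist.
have := mink (fun i => x ord0 i - y ord0 i) (fun i => y ord0 i - z ord0 i).
by under eq_bigr do rewrite addrA subrK.
Qed.

Lemma edist_bound (x y : V) a : 0 <= a -> (forall i, `|x ord0 i - y ord0 i| <= a) ->
  edist x y <= Num.sqrt n%:R * a.
Proof.
move=> a0 h; rewrite -(ger0_norm a0) -sqrtr_sqr -sqrtrM ?ler0n // /edist ler_sqrt; last first.
  by apply: mulr_ge0; [exact: ler0n | exact: sqr_ge0].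
have -> : n%:R * a ^+ 2 = \sum_(i < n) a ^+ 2 by rewrite sumr_const card_ord mulr_natl.
apply: ler_sum => i _; rewrite -real_normK ?num_real //; rewrite lerXn2r ?nnegrE //.
Qed.

Lemma edist_scale (x z a b : V) c : (forall i, x ord0 i - z ord0 i = c * (a ord0 i - b ord0 i)) ->
  edist x z = `|c| * edist a b.
Proof.
move=> h; rewrite /edist -sqrtr_sqr -sqrtrM ?sqr_ge0 //; congr Num.sqrt.
rewrite mulr_sumr; apply: eq_bigr => i _; rewrite h exprMn.
by [].
Qed.

End Geo.

Section Cubes.
Variable R : realType.
Variable n : nat.
Hypothesis hn : (0 < n)%N.
Variable eps : R.
Hypothesis heps : 0 < eps.
Local Notation V := 'rV[R]_n.
Local Notation sd := (@side R n eps).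

Lemma sqrtn_gt0 : 0 < Num.sqrt (n%:R : R).
Proof. by rewrite sqrtr_gt0 ltr0n. Qed.

Lemma side_gt0 : 0 < sd.
Proof. by rewrite /side divr_gt0 // mulr_gt0 // sqrtn_gt0. Qed.

Lemma side_eps : 2 * Num.sqrt (n%:R : R) * sd = eps.
Proof. have := sqrtn_gt0; rewrite /side => h; field; rewrite gt_eqF //. Qed.

Definition clampz (y a b : R) := if y < a then a else if b < y then b else y.

Lemma clamp_prop (s j t K y : R) : 0 < s -> `|t - j| <= K -> j * s <= y <= (j + 1) * s ->
  t * s <= clampz y (t * s) ((t + 1) * s) <= (t + 1) * s /\
  `|y - clampz y (t * s) ((t + 1) * s)| <= K * s.
Proof.
move=> s0 /ler_normlP [h1 h2] /andP[y1 y2]; rewrite /clampz.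
case: ifP => [ya|/negbT]; last rewrite -leNgt => ya; [|case: ifP => [yb|/negbT]]; last rewrite -leNgt => yb.
- split; first by apply/andP; split; nra.
  by rewrite ler_norml; apply/andP; split; nra.
- split; first by apply/andP; split; nra.
  by rewrite ler_norml; apply/andP; split; nra.
- split; first by apply/andP; split; nra.
  by rewrite subrr normr0; nra.
Qed.

Lemma cube_enl (j t : 'I_n -> int) (K : int) (y : V) :
  (forall i, `|t i - j i| <= K) -> cube eps j y -> enl eps K (cube eps t) y.
Proof.
move=> hK hy.
have hK' : forall i, `|(t i)%:~R - (j i)%:~R| <= (K%:~R : R).
  by move=> i; rewrite -intrB -intr_norm ler_int.
have hy' : forall i, (j i)%:~R * sd <= y ord0 i <= ((j i)%:~R + 1) * sd.
  by move=> i; have := hy i; rewrite intrD.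
exists (\row_(i < n) clampz (y ord0 i) ((t i)%:~R * sd) (((t i)%:~R + 1) * sd)).
  move=> i; rewrite mxE intrD.
  by case: (clamp_prop side_gt0 (hK' i) (hy' i)).
move=> i; rewrite mxE.
by case: (clamp_prop side_gt0 (hK' i) (hy' i)).
Qed.

Lemma cube_meet (t u : 'I_n -> int) :
  (forall i, `|t i - u i| <= 1) -> exists x : V, cube eps t x /\ cube eps u x.
Proof.
move=> h.
exists (\row_(i < n) ((Num.max (t i) (u i))%:~R * sd)).
have s0 := side_gt0.
split => i; rewrite mxE; have := h i; rewrite ler_norml => /andP[h1 h2];
  rewrite ler_pM2r // ler_pM2r // ler_int ler_int;
  case: (leP (t i) (u i)) => hle; apply/andP; split; lia.
Qed.

Definition cube_of (x : V) : 'I_n -> int := fun i => Num.floor (x ord0 i / sd).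

Lemma cube_of_in (x : V) : cube eps (cube_of x) x.
Proof.
have s0 := side_gt0.
move=> i; rewrite /cube_of; apply/andP; split.
  by rewrite -ler_pdivlMr // floor_le.
by rewrite -ler_pdivrMr // ltW // floorD1_gt.
Qed.

Lemma idx_bound (w y : V) i :
  (`|cube_of w i - cube_of y i|%:~R : R) < `|w ord0 i - y ord0 i| / sd + 1.
Proof.
have s0 := side_gt0.
have e : `|w ord0 i - y ord0 i| / sd = `|w ord0 i / sd - y ord0 i / sd|.
  have si : 0 < sd^-1 by rewrite invr_gt0.
  by rewrite -mulrBl normrM (gtr0_norm si).
rewrite e /cube_of intr_norm intrB.
move: (w ord0 i / sd) (y ord0 i / sd) => u v.
have a1 := floor_le u; have a2 := floorD1_gt u.
have b1 := floor_le v; have b2 := floorD1_gt v.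
rewrite intrD in a2; rewrite intrD in b2.
have one : (1%:~R : R) = 1 by [].
rewrite one in a2 b2.
have := ler_norm (u - v); have := ler_norm (v - u); rewrite distrC.
move: (Num.floor u)%:~R (Num.floor v)%:~R a1 a2 b1 b2 => a b a1 a2 b1 b2 h1 h2.
rewrite ltr_norml; apply/andP; split; lra.
Qed.

End Cubes.

Section Walk.
Variable R : realType.
Variable n : nat.
Hypothesis hn : (0 < n)%N.
Variable eps : R.
Hypothesis heps : 0 < eps.
Local Notation V := 'rV[R]_n.
Variables X A : {fset V}.

Lemma bnd_pt (j : 'I_n -> int) (x : V) : meets eps (fset_set_of A) j -> x \in X -> x \notin A ->
  enl eps 1 (cube eps j) x -> boundary_cube eps X A j.
Proof. by move=> hm hX hA he; split => // -[_ h _]; move: hA; rewrite h. Qed.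

Lemma bnd_empty (j t : 'I_n -> int) : meets eps (fset_set_of A) j ->
  (forall i, `|t i - j i| <= 1) -> ~ meets eps (fset_set_of A) t -> boundary_cube eps X A j.
Proof.
move=> hm ht hnt; split => // -[_ _ h]; apply: hnt; apply: h => x hx.
apply: (cube_enl hn heps) hx => i; by rewrite distrC.
Qed.

Lemma int_nb (j t : 'I_n -> int) : interior_cube eps X A j ->
  (forall i, `|t i - j i| <= 1) -> meets eps (fset_set_of A) t.
Proof.
move=> [_ _ h] ht; apply: h => x hx.
apply: (cube_enl hn heps) hx => i; by rewrite distrC.
Qed.

Definition good (jw : 'I_n -> int) := forall u, (forall i, `|u i - jw i| <= 1) ->
  meets eps (fset_set_of A) u -> boundary_cube eps X A u.

Lemma normz_le (a b : int) : (`|a| <= b) = (- b <= a <= b).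
Proof. by rewrite ler_norml. Qed.

Lemma walk (jw : 'I_n -> int) : good jw -> forall (m : nat) (j0 : 'I_n -> int),
  meets eps (fset_set_of A) j0 -> (forall i, `|jw i - j0 i| <= m%:Z) ->
  exists U T, [/\ boundary_cube eps X A U, (exists x, cube eps T x /\ cube eps U x)
     & forall i, `|T i - j0 i| <= (m - 2)%N%:Z].
Proof.
move=> hg m; elim: m => [|m IH] j0 hm hb.
  exists j0, j0; split.
  - apply: hg => // i; have := hb i; rewrite distrC !normz_le => /andP[? ?].
    apply/andP; split; lia.
  - by apply: (cube_meet hn heps) => i; rewrite subrr normr0.
  - by move=> i; rewrite subrr normr0.
have [m0|mpos] := eqVneq m 0%N.
  subst m; exists j0, j0; split.
  - by apply: hg => // i; rewrite distrC; exact: hb.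
  - by apply: (cube_meet hn heps) => i; rewrite subrr normr0.
  - by move=> i; rewrite subrr normr0.
have [hbd|hnbd] := pselect (boundary_cube eps X A j0).
  exists j0, j0; split => //.
  - by apply: (cube_meet hn heps) => i; rewrite subrr normr0.
  - by move=> i; rewrite subrr normr0.
have hint : interior_cube eps X A j0.
  case: (pselect (interior_cube eps X A j0)) => // hni; exfalso; exact: hnbd.
pose j1 := fun i => j0 i + (if j0 i < jw i then 1 else if jw i < j0 i then -1 else 0).
have h10 : forall i, `|j1 i - j0 i| <= 1.
  move=> i; rewrite /j1 addrAC subrr add0r; case: ifP => _; first by rewrite normr1.
  by case: ifP => _; rewrite ?normrN ?normr1 ?normr0.
have hw1 : forall i, `|jw i - j1 i| <= m%:Z.
  move=> i; have := hb i; rewrite /j1 !normz_le.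
  case: ifP => h1; last case: ifP => h2; move=> /andP[h3 h4]; apply/andP; split; lia.
have hm1 := int_nb hint h10.
have [m1|m2] := eqVneq m 1%N.
  subst m; exists j1, j0; split.
  - by apply: hg => // i; rewrite distrC; exact: hw1.
  - by apply: (cube_meet hn heps) => i; rewrite distrC; exact: h10.
  - by move=> i; rewrite subrr normr0.
have [U [T [hU hTU hT]]] := IH j1 hm1 hw1.
exists U, T; split => // i.
have := hT i; have := h10 i; rewrite !normz_le => /andP[a1 a2] /andP[a3 a4].
apply/andP; split; lia.
Qed.

End Walk.

Section Thick.
Variable R : realType.
Variable n : nat.
Hypothesis hn2 : (2 <= n)%N.
Variable eps : R.
Hypothesis heps : 0 < eps.
Local Notation V := 'rV[R]_n.
Local Notation sd := (@side R n eps).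
Local Notation Nf := (@Nfrak R n).
Local Notation nf := (@nfrak R n).
Local Notation mf := (@mfrak R n).

Lemma hn : (0 < n)%N. Proof. by apply: leq_trans hn2. Qed.

Lemma sqrtn_ge1 : 1 <= Num.sqrt (n%:R : R).
Proof.
rewrite -[X in X <= _]sqrtr1 ler_sqrt ?ler0n // ler1n; exact: hn.
Qed.

Lemma nf_ge : Num.sqrt (n%:R : R) - 1 <= nf%:~R.
Proof. exact: ceil_ge. Qed.

Lemma mf_ge : 2 * Num.sqrt (n%:R : R) <= mf%:~R.
Proof. exact: ceil_ge. Qed.

Lemma nf_ge0 : 0 <= nf.
Proof. rewrite /nfrak ceil_ge0; have := sqrtn_ge1; lra. Qed.

Lemma mf_ge0 : 0 <= mf.
Proof. rewrite /mfrak ceil_ge0; have := sqrtn_ge1; lra. Qed.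

Lemma Nf_ge0 : 0 <= Nf.
Proof. by rewrite /Nfrak addr_ge0 // ?nf_ge0 ?mf_ge0. Qed.

Lemma NfE : (Nf%:~R : R) = nf%:~R + mf%:~R.
Proof. by rewrite /Nfrak intrD. Qed.

Lemma thick_core (Z : set V) (p y : V) : edist p y <= eps ->
  thicken eps nf Z p -> thicken eps Nf Z y.
Proof.
move=> hpy [j [hj [s hs hps]]]; exists j; split => //; exists s => // i.
have s0 := side_gt0 hn heps.
have e := side_eps hn eps.
have h1 := coord_le y p i; rewrite edist_sym in h1.
have h2 := hps i.
have := mf_ge.
rewrite NfE.
have : `|y ord0 i - s ord0 i| <= `|y ord0 i - p ord0 i| + `|p ord0 i - s ord0 i|.
  by have := ler_normD (y ord0 i - p ord0 i) (p ord0 i - s ord0 i); rewrite addrA subrK.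
move=> h4 h3.
have h5 : 2 * Num.sqrt (n%:R : R) * sd <= mf%:~R * sd by rewrite ler_pM2r.
rewrite mulrDl; lra.
Qed.

End Thick.

Section Noise.
Variable R : realType.
Variable n : nat.
Hypothesis hn2 : (2 <= n)%N.
Variable eps : R.
Hypothesis heps : 0 < eps.
Local Notation V := 'rV[R]_n.
Local Notation sd := (@side R n eps).
Local Notation Nf := (@Nfrak R n).
Local Notation nf := (@nfrak R n).
Local Notation mf := (@mfrak R n).

Lemma same_cube_close (j : 'I_n -> int) (x w : V) :
  cube eps j x -> cube eps j w -> edist x w <= eps / 2.
Proof.
have hn1 := hn hn2.
have s0 := side_gt0 hn1 heps.
have e := side_eps hn1 eps.
move=> hx hw.
have -> : eps / 2 = Num.sqrt n%:R * sd by rewrite -[X in X / 2]e; field.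
apply: edist_bound; first exact: ltW.
move=> i; have := hx i; have := hw i; rewrite intrD => /andP[a1 a2] /andP[b1 b2].
rewrite ler_norml; apply/andP; split; lra.
Qed.

Lemma thick_noise (X C : {fset V}) (p y : V) (r0 : R) :
  p \in X -> p \notin C -> y \in C -> (forall x, x \in C -> r0 <= edist p x) ->
  edist p y <= r0 + eps -> thicken eps Nf (bdry eps X C) y.
Proof.
move=> pX pC yC hr0 hpy.
have hn1 := hn hn2.
have s0 := side_gt0 hn1 heps.
have e := side_eps hn1 eps.
have [w [hyw hg]] : exists w : V, edist y w <= 3 / 2 * eps + sd / 2 /\ good eps X C (cube_of eps w).
  have [hr|hr] := lerP r0 (eps / 2 + sd / 2).
    exists p; split; first by rewrite edist_sym; lra.
    move=> u hu hm; apply: (bnd_pt hm pX pC).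
    exact: (cube_enl hn1 heps) hu (cube_of_in hn1 heps p).
  have D0 : r0 <= edist p y by apply: hr0.
  set D := edist p y in D0 hpy.
  set lam := (r0 - eps / 2 - sd / 2) / D.
  have Dp : 0 < D by lra.
  have lam0 : 0 <= lam by apply: divr_ge0; lra.
  have lam1 : lam <= 1 by rewrite /lam ler_pdivrMr //; lra.
  have lamD : lam * D = r0 - eps / 2 - sd / 2 by rewrite /lam mulrVK // unitfE gt_eqF.
  exists (p + lam *: (y - p)); split.
    rewrite (@edist_scale _ _ _ _ y p (1 - lam)); last first.
      by move=> i; rewrite !mxE; ring.
    rewrite ger0_norm; last lra.
    rewrite edist_sym -/D mulrBl mul1r lamD; lra.
  have hempty : ~ meets eps (fset_set_of C) (cube_of eps (p + lam *: (y - p))).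
    move=> [x [hx xC]].
    have := hr0 x xC.
    have h1 := same_cube_close hx (cube_of_in hn1 heps (p + lam *: (y - p))).
    have h2 := edist_tri p (p + lam *: (y - p)) x.
    rewrite (@edist_scale _ _ p (p + lam *: (y - p)) y p (- lam)) in h2; last first.
      by move=> i; rewrite !mxE; ring.
    rewrite normrN ger0_norm // (edist_sym y p) -/D lamD (edist_sym (p + lam *: (y - p)) x) in h2.
    lra.
  move=> u hu hm; apply: (@bnd_empty R n hn1 eps heps X C u _ hm _ hempty).
  by move=> i; rewrite distrC; exact: hu.
pose M := (absz Nf + 2)%N.
have hM : forall i, `|cube_of eps w i - cube_of eps y i| <= M%:Z.
  move=> i.
  have h1 := idx_bound hn1 heps w y i.
  have h2 := coord_le w y i; rewrite edist_sym in h2.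
  have h3 := @nf_ge R n; have h4 := @mf_ge R n.
  have h5 : `|w ord0 i - y ord0 i| / sd <= 3 * Num.sqrt (n%:R : R) + 1 / 2.
    rewrite ler_pdivrMr // mulrDl.
    have -> : 1 / 2 * sd = sd / 2 by rewrite mul1r mulrC.
    have -> : 3 * Num.sqrt (n%:R : R) * sd = 3 / 2 * eps by rewrite -[X in _ = _ * X]e; field.
    lra.
  have h6 : (`|cube_of eps w i - cube_of eps y i|%:~R : R) < (Nf + 3)%:~R.
    rewrite intrD NfE; have -> : (3%:~R : R) = 3 by [].
    lra.
  rewrite ltr_int in h6.
  rewrite /M PoszD gez0_abs ?Nf_ge0 //; lia.
have hy0 : meets eps (fset_set_of C) (cube_of eps y) by exists y; split => //; exact: cube_of_in.
have [U [T [hU [x [xT xU]] hT]]] := walk hn1 heps hg hy0 hM.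
exists T; split.
  by exists x; split => //; exists U; split.
apply: (cube_enl hn1 heps) (cube_of_in hn1 heps y) => i.
by have := hT i; rewrite /M addnK gez0_abs ?Nf_ge0.
Qed.

End Noise.

Section Dbscan.
Variable R : realType.
Variable n : nat.
Local Notation V := 'rV[R]_n.
Local Open Scope fset_scope.

Lemma card_sep (A : {fset V}) (P : pred V) :
  #|` [fset z in A | P z]| = count P (enum_fset A).
Proof.
have -> : [fset z in A | P z] = [fset z in filter P (enum_fset A)].
  by apply/fsetP => z; rewrite !inE mem_filter andbC.
by rewrite card_fseq undup_id ?size_filter // filter_uniq // fset_uniq.
Qed.

Lemma exists_min (A : {fset V}) (f : V -> R) z : z \in A ->
  exists2 z0, z0 \in A & forall x, x \in A -> f z0 <= f x.
Proof.
move=> zA.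
suff : forall (s : seq V) z, z \in s -> exists2 z0, z0 \in s & forall x, x \in s -> f z0 <= f x.
  by move/(_ (enum_fset A) z zA).
elim => [//|a s IH] z' /=; rewrite inE => /orP[/eqP _|zs].
  case: s IH => [|b s] IH.
    by exists a; rewrite ?inE // => x; rewrite inE => /eqP ->.
  have [z0 z0s hz0] := IH b (mem_head b s).
  have [le|lt] := lerP (f a) (f z0).
    exists a; first by rewrite inE eqxx.
    move=> x; rewrite inE => /orP[/eqP ->//|/hz0]; exact: le_trans.
  exists z0; first by rewrite inE z0s orbT.
  move=> x; rewrite inE => /orP[/eqP ->|/hz0 //]; exact: ltW.
have [z0 z0s hz0] := IH z' zs.
have [le|lt] := lerP (f a) (f z0).
  exists a; first by rewrite inE eqxx.
  move=> x; rewrite inE => /orP[/eqP ->//|/hz0]; exact: le_trans.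
exists z0; first by rewrite inE z0s orbT.
move=> x; rewrite inE => /orP[/eqP ->|/hz0 //]; exact: ltW.
Qed.

Variable k : nat.
Variable eps : R.
Variable Y : {fset V}.
Local Notation core := (core_pts k eps Y).

Lemma core_sub : core `<=` Y.
Proof. by apply/fsubsetP => x; rewrite !inE => /andP[]. Qed.

Lemma in_core x : (x \in core) = (x \in Y) && (k < #|` [fset y in Y | (edist x y <= eps)%R]|)%N.
Proof. by rewrite !inE. Qed.

Lemma in_noise x : (x \in noise_pts k eps Y) = (x \notin core) && (x \in Y).
Proof. by rewrite /noise_pts inE. Qed.

Lemma comp_sub C : dbscan_comp k eps Y C -> forall x, x \in C -> x \in core.
Proof. by move=> [b _ ->] x; rewrite !inE => /andP[]. Qed.

Lemma comp_close C p y : dbscan_comp k eps Y C -> p \in C -> y \in core ->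
  (edist p y <= eps)%R -> y \in C.
Proof.
move=> [b hb ->] hp yc hpy.
move: hp; rewrite inE => /andP[pc /asboolP [hb' [s [hs hl ha]]]].
rewrite inE /=; apply/andP; split => //; apply/asboolP; split => //; exists (rcons s y); split.
- by rewrite rcons_path hs /= hl.
- by rewrite last_rcons.
- by rewrite all_rcons yc.
Qed.

Definition compof y := [fset q in core | `[< reach eps core y q >]].

Lemma compof_prop y : y \in core -> dbscan_comp k eps Y (compof y) /\ y \in compof y.
Proof.
move=> yc; split; first by exists y.
rewrite inE /=; apply/andP; split => //; apply/asboolP; split => //; exists [::]; split => //.
Qed.

End Dbscan.

Section Final.
Variable R : realType.
Variable n : nat.
Hypothesis hn2 : (2 <= n)%N.
Local Notation V := 'rV[R]_n.
Local Open Scope fset_scope.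
Variables X Y : {fset V}.
Variable k : nat.
Variable eps : R.
Hypothesis hYX : Y `<=` X.
Hypothesis heps : 0 < eps.
Local Notation core := (core_pts k eps Y).
Local Notation F := (Fset X k eps Y).
Local Notation le := (fun a b : R => (a <= b)%R).

Lemma inF y : y \in Y -> (y \in noise_pts k eps Y \/ exists C, dbscan_comp k eps Y C /\
  (thicken eps (@Nfrak R n) (bdry eps X C) y /\ y \in C)) -> y \in F.
Proof.
move=> yY h; rewrite /Fset /JF_set inE /=; apply/andP; split => //; apply/asboolP.
by case: h; [right|left].
Qed.

Lemma F_sub : F `<=` Y.
Proof. by apply/fsubsetP => x; rewrite /Fset /JF_set inE /= => /andP[]. Qed.

Lemma inJ p : p \in Jset X k eps Y -> p \in Y /\
  ((exists C, dbscan_comp k eps Y C /\ (thicken eps (@nfrak R n) (bdry eps X C) p /\ p \in C))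
   \/ p \in noise_pts k eps Y).
Proof. by rewrite /Jset /JF_set inE /= => /andP[pY /asboolP h]. Qed.

Lemma count_dist (p : V) (x : R) :
  count (fun a : R => (a <= x)%R) [seq edist p z | z <- enum_fset (Y `\ p)] =
  #|` [fset z in Y `\ p | (edist p z <= x)%R]|.
Proof. by rewrite count_map card_sep. Qed.

Lemma key (p : V) (k' : nat) : k = k'.+1 -> p \in Jset X k eps Y ->
  forall z, z \in Y `\ p ->
  (edist p z <= nth 0 (sort le [seq edist p z | z <- enum_fset (Y `\ p)]) k')%R -> z \in F.
Proof.
move=> hk /inJ [pY hJ] z zYp hz.
have zY : z \in Y by move: zYp; rewrite inE => /andP[].
have [zc|znc] := boolP (z \in core); last first.
  by apply: inF => //; left; rewrite in_noise znc.
set c := nth 0 _ k' in hz.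
case: hJ => [[C [hC [hth pC]]]|pn].
-
  have pc := comp_sub hC pC.
  have hc : (c <= eps)%R.
    apply: nth_sort_le; rewrite count_dist.
    move: pc; rewrite in_core => /andP[_]; rewrite hk.
    set B := [fset y in Y | _].
    have -> : [fset z in Y `\ p | (edist p z <= eps)%R] = B `\ p.
      by apply/fsetP => x; rewrite !inE; case: (x == p).
    rewrite (cardfsD1 p B); case: (p \in B) => /=; rewrite ?add0n ?add1n //.
    by move=> h; apply: ltnW.
  apply: inF => //; right; exists C; split => //.
  have zC : z \in C by apply: (comp_close hC pC zc); exact: le_trans hz hc.
  split => //; apply: (thick_core hn2 heps _ hth); exact: le_trans hz hc.
-
  have pnc : p \notin core by move: pn; rewrite in_noise => /andP[].
  have [z0 z0c hz0] := exists_min (edist p) zc.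
  set r0 := edist p z0.
  have hc : (c <= r0 + eps)%R.
    apply: nth_sort_le; rewrite count_dist.
    move: z0c; rewrite in_core => /andP[_]; rewrite hk.
    set B := [fset y in Y | _].
    have sub : B `\ p `<=` [fset z in Y `\ p | (edist p z <= r0 + eps)%R].
      apply/fsubsetP => x; rewrite !inE => /andP[xp /andP[xY hx]].
      rewrite xp xY /=; apply: le_trans (edist_tri p z0 x) _; exact: lerD.
    move=> h; apply: leq_trans (fsubset_leq_card sub).
    move: h; rewrite (cardfsD1 p B); case: (p \in B) => /=; rewrite ?add0n ?add1n //.
    by move=> h; apply: ltnW.
  have [hCc zC] := compof_prop zc.
  apply: inF => //; right; exists (compof k eps Y z); split => //; split => //.
  apply: (@thick_noise R n hn2 eps heps X (compof k eps Y z) p z r0).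
  + exact: (fsubsetP hYX).
  + by apply/negP => /(comp_sub hCc); apply/negP.
  + by [].
  + by move=> x /(comp_sub hCc) /hz0.
  + exact: le_trans hz hc.
Qed.

Lemma core_dist_eq p : p \in Jset X k eps Y -> core_dist k F p = core_dist k Y p.
Proof.
move=> hp; rewrite /core_dist; case hk: k => [//|k']; rewrite -hk.
set sY := [seq edist p z | z <- enum_fset (Y `\ p)].
set sF := [seq edist p z | z <- enum_fset (F `\ p)].
have FY : F `\ p `<=` Y `\ p by apply: fsetSD; exact: F_sub.
have [lt|ge] := ltnP k' (size sY); last first.
  rewrite !nth_default ?size_sort //.
  apply: leq_trans _ ge; rewrite /sF /sY !size_map; exact: fsubset_leq_card.
apply: nth_sort_eq => //.
rewrite /sY /sF !filter_map.
apply: perm_map; apply: uniq_perm; rewrite ?filter_uniq ?fset_uniq // => x.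
rewrite !mem_filter.
apply/andP/andP => -[hx xin]; split => //.
  have xY : x \in Y `\ p by [].
  rewrite in_fsetD1; move: xin; rewrite in_fsetD1 => /andP[-> _] /=.
  exact: (key hk hp xY hx).
by move/fsubsetP: FY => /(_ x xin).
Qed.

End Final.

Local Open Scope fset_scope.
Theorem lemma5p4 (R : realType) (n : nat) (X Y : {fset 'rV[R]_n}) (k : nat) (eps : R)
  (p q : 'rV[R]_n) :
  (2 <= n)%N -> Y `<=` X -> 0 < eps ->
  p \in Jset X k eps Y -> q \in Jset X k eps Y ->
  reach_dist k (Fset X k eps Y) p q = reach_dist k Y p q.
Proof.
move=> hn2 hYX heps hp hq; rewrite /reach_dist; case: (p == q) => //.
by rewrite !core_dist_eq.
Qed.
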